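(* Let $p$ be a prime, $m$ a positive integer, $e=1$, and $b\ge2$ an integer with $b\leq p$. Then $d_b(\mathcal{C}_i)=i+b$ for each $0\leq i\leq p-b$.
   Context: For $0\le i\le p^e$, $\mathcal{C}_i$ denotes the cyclic code $\langle (x-1)^i\rangle\subseteq \mathbb{F}_{p^m}[x]/\langle x^{p^e}-1\rangle$, with polynomials identified with their coefficient vectors in $\mathbb{F}_{p^m}^{p^e}$. For $c\in\mathbb{F}_{p^m}^{n}$, $\pi_b(c)$ is the list of the $n$ cyclically consecutive $b$-tuples $(c_j,\dots,c_{j+b-1})$ (indices mod $n$), $d_b(c,c')=d_H(\pi_b(c),\pi_b(c'))$, and $d_b(\mathcal{C})$ is the minimum of $d_b(c,c')$ over distinct $c,c'\in\mathcal{C}$. *)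

(* Defs.v *)
From mathcomp Require Import all_boot all_order all_algebra all_field.
Set Implicit Arguments. Unset Strict Implicit. Unset Printing Implicit Defensive.
Import GRing.Theory.
Local Open Scope ring_scope.

Definition vpoly (F : fieldType) (n : nat) (c : 'rV[F]_n) : {poly F} :=
  \sum_(j < n) c 0 j *: 'X^j.

(* Membership in C_i = < (x-1)^i > inside F[x]/<x^n - 1> (n = p^e):
   the residue of c is g (x-1)^i mod x^n - 1 for some polynomial g. *)
Definition in_cyc_code (F : fieldType) (n i : nat) (c : 'rV[F]_n) : Prop :=
  exists g : {poly F}, vpoly c = (g * ('X - 1) ^+ i) %% ('X^n - 1).

Definition cidx (n : nat) (j : 'I_n) (k : nat) : 'I_n :=
  Ordinal (ltn_pmod (j + k) (leq_ltn_trans (leq0n j) (ltn_ord j))).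

Definition pib (F : fieldType) (n b : nat) (c : 'rV[F]_n) : 'I_n -> {ffun 'I_b -> F} :=
  fun j => [ffun k : 'I_b => c 0 (cidx j k)].

Definition hamming (T : eqType) (n : nat) (u v : 'I_n -> T) : nat :=
  #|[pred j : 'I_n | u j != v j]|.

Definition bdist (F : fieldType) (n b : nat) (c c' : 'rV[F]_n) : nat :=
  hamming (pib b c) (pib b c').

(* Main.v *)
From mathcomp Require Import all_boot all_order all_algebra all_field.
From mathcomp Require Import ring zify.
Require Import Defs.
Set Implicit Arguments. Unset Strict Implicit. Unset Printing Implicit Defensive.
Import GRing.Theory.
Local Open Scope ring_scope.

Section VP.
Variable F : fieldType.
Variable n : nat.

Lemma coef_vpoly (c : 'rV[F]_n) k : (vpoly c)`_k = \sum_(j < n) c 0 j * (k == j)%:R.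
Proof. by rewrite /vpoly coef_sum; apply: eq_bigr => j _; rewrite coefZ coefXn. Qed.

Lemma coef_vpoly_ord (c : 'rV[F]_n) (j : 'I_n) : (vpoly c)`_j = c 0 j.
Proof.
rewrite coef_vpoly (bigD1 j) //= eqxx mulr1 big1 ?addr0 // => j' ne.
case: eqP => [e|]; last by rewrite mulr0.
by move: ne; rewrite (_ : j' = j) ?eqxx //; apply: val_inj.
Qed.

Lemma size_vpoly (c : 'rV[F]_n) : (size (vpoly c) <= n)%N.
Proof.
apply/leq_sizeP => k kn; rewrite coef_vpoly big1 // => j _.
by rewrite (gtn_eqF (leq_trans (ltn_ord j) kn)) mulr0.
Qed.

Lemma vpoly_row (Q : {poly F}) : (size Q <= n)%N -> vpoly (\row_(j < n) Q`_j) = Q.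
Proof.
move=> sQ; apply/polyP => k; case: (ltnP k n) => kn.
  by have := coef_vpoly_ord (\row_(j < n) Q`_j) (Ordinal kn); rewrite mxE /= => ->.
move/leq_sizeP: (size_vpoly (\row_(j < n) Q`_j)) => /(_ k kn) ->.
by move/leq_sizeP: sQ => /(_ k kn) ->.
Qed.

Lemma vpoly0 : vpoly (0 : 'rV[F]_n) = 0.
Proof. by rewrite /vpoly big1 // => j _; rewrite mxE scale0r. Qed.

End VP.

Lemma Xp_sub1 (F : fieldType) (p : nat) : p \in [pchar F] -> 'X^p - 1 = ('X - 1 : {poly F}) ^+ p.
Proof.
move=> Hp; have Hq : p \in [pchar {poly F}] by rewrite pchar_poly.
have := pFrobenius_autB_comm Hq (commr1 'X).
by rewrite !pFrobenius_autE expr1n => ->.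
Qed.

Lemma cyc_dvd (F : fieldType) (p i : nat) (c : 'rV[F]_p) : p \in [pchar F] ->
  (i <= p)%N -> in_cyc_code i c -> ('X - 1) ^+ i %| vpoly c.
Proof.
move=> Hp ip [g ->].
have d : ('X - 1 : {poly F}) ^+ i %| 'X^p - 1 by rewrite Xp_sub1 // dvdp_exp2l.
by rewrite -(dvdp_mod _ d) dvdp_mull.
Qed.

Lemma card_count n (P : pred nat) : #|[set j : 'I_n | P j]| = count P (iota 0 n).
Proof.
rewrite cardsE cardE /enum_mem size_filter -enumT -val_enum_ord count_map.
by apply: eq_count => j.
Qed.
Section Wt.
Variable F : fieldType.
Variable p : nat.
Hypothesis Hp : p \in [pchar F].

Lemma natr_inj_lt (j e : nat) : (j < p)%N -> (e < p)%N -> (j%:R == e%:R :> F) = (j == e).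
Proof.
move=> hj he; apply/eqP/eqP => [h|->] //.
wlog le: j e hj he h / (e <= j)%N.
  move=> W; case: (leqP e j) => [|/ltnW] l; first exact: W.
  by apply/esym/W.
apply/eqP; rewrite eqn_leq le andbT -subn_eq0.
have: (j - e)%:R == 0 :> F by rewrite natrB // h subrr.
rewrite -(dvdn_pcharf Hp) => hd.
case: (posnP (j - e)) => [//|pos].
have h2 := dvdn_leq pos hd; have: (p <= j)%N by apply: leq_trans h2 (leq_subr _ _).
by rewrite leqNgt hj.
Qed.

Lemma deriv_div (f : {poly F}) (i : nat) (e : nat) :
  ('X - 1) ^+ i.+1 %| f -> ('X - 1) ^+ i %| 'X * f^`() - e%:R *: f.
Proof.
case/dvdpP => h ->.
rewrite derivM deriv_exp derivB derivX derivC subr0 mul1r /=.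
apply/dvdpP; exists ('X * (h^`() * ('X - 1)) + 'X * h *+ i.+1 - e%:R *: (h * ('X - 1))).
rewrite -!mul_polyC. set P := ('X - 1 : {poly F}).
rewrite !exprS. ring.
Qed.


Lemma coef_g (f : {poly F}) (e j : nat) :
  ('X * f^`() - e%:R *: f)`_j = (j%:R - e%:R) * f`_j.
Proof.
rewrite coefB coefZ coefXM mulrBl mulr_natl; case: j => [|k].
  by rewrite /= mul0r.
by rewrite /= coef_deriv mulr_natl.
Qed.

Lemma root1_mono (f : {poly F}) (e : nat) :
  size f = e.+1 -> (forall j, (j < e)%N -> f`_j = 0) -> f.[1] = lead_coef f.
Proof.
move=> hs hj; rewrite horner_coef hs big_ord_recr /= big1 ?add0r.
  by rewrite expr1n mulr1 lead_coefE hs.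
by move=> j _; rewrite hj ?mul0r.
Qed.

Lemma wt_bound (i : nat) : forall f : {poly F}, f != 0 -> (size f <= p)%N ->
  ('X - 1) ^+ i %| f -> (i < #|[set j : 'I_p | (f`_j != 0)%R]|)%N.
Proof.
have key : forall f : {poly F}, f != 0 -> (size f <= p)%N ->
    ((size f).-1 < p)%N /\ f`_(size f).-1 != 0.
  move=> f f0 sf; split; last by rewrite -lead_coefE lead_coef_eq0.
  by apply: leq_trans sf; rewrite prednK // size_poly_gt0.
elim: i => [|i IH] f f0 sf dv.
  have [lt nz] := key f f0 sf.
  by rewrite card_gt0; apply/set0Pn; exists (Ordinal lt); rewrite inE.
have [lt nz] := key f f0 sf.
set e := (size f).-1 in lt nz.
set g := 'X * f^`() - e%:R *: f.
have dg : ('X - 1) ^+ i %| g by apply: deriv_div.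
have cg := coef_g f e.
have [g0|gn0] := eqVneq g 0.
  exfalso.
  have hj : forall j, (j < e)%N -> f`_j = 0.
    move=> j je; have := cg j; rewrite -/g g0 coef0 => /esym/eqP.
    rewrite mulf_eq0 subr_eq0 natr_inj_lt ?(ltn_trans je) // (ltn_eqF je) /=.
    by move/eqP.
  have hs : size f = e.+1 by rewrite /e prednK // size_poly_gt0.
  have := root1_mono hs hj.
  have : root f 1.
    rewrite -dvdp_XsubCl polyC1; apply: dvdp_trans dv.
    by rewrite exprS dvdp_mulIl.
  move/rootP => ->; move/esym/eqP; rewrite lead_coef_eq0 (negbTE f0) //.
have sg : (size g <= p)%N.
  apply/leq_sizeP => j pj; rewrite cg.
  by move/leq_sizeP: sf => ->; rewrite ?mulr0.
have := IH g gn0 sg dg.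
set Sf := [set j : 'I_p | f`_j != 0].
set Sg := [set j : 'I_p | g`_j != 0].
have eS : Ordinal lt \in Sf by rewrite inE.
have sub : Sg \subset Sf :\ Ordinal lt.
  apply/subsetP => j; rewrite !inE cg mulf_eq0 negb_or subr_eq0 => /andP[a ->].
  rewrite andbT; apply: contra a => /eqP ->; by [].
move=> h; rewrite (cardsD1 (Ordinal lt)) eS add1n ltnS.
exact: leq_trans h (subset_leq_card sub).
Qed.

End Wt.
Section Comb.
Variable n : nat.

Lemma cidxA (j : 'I_n) a b : cidx (cidx j a) b = cidx j (a + b).
Proof. by apply: val_inj; rewrite /= modnDml addnA. Qed.

Lemma cidx0 (j : 'I_n) : cidx j 0 = j.
Proof. by apply: val_inj; rewrite /= addn0 modn_small. Qed.

Lemma cidxn (j : 'I_n) : cidx j n = j.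
Proof. by apply: val_inj; rewrite /= modnDr modn_small. Qed.

Definition sh (j : 'I_n) := cidx j 1.

Lemma sh_inj : injective sh.
Proof.
move=> j j' e; have := congr1 (fun x => cidx x n.-1) e.
rewrite /sh !cidxA add1n prednK ?cidxn //.
by case: n j {e} => [[]|].
Qed.

Lemma my_closure (N : {set 'I_n}) (j0 : 'I_n) :
  (forall j, j \in N -> sh j \in N) -> j0 \in N -> forall j, j \in N.
Proof.
move=> cl j0N j.
have H : forall t, cidx j0 t \in N.
  elim=> [|t IH]; first by rewrite cidx0.
  by rewrite -addn1 -cidxA; apply: cl.
have -> : j = cidx j0 (j + n - j0).
  apply: val_inj => /=.
  have lj0 := ltn_ord j0; have lj := ltn_ord j.
  rewrite addnBA; last by lia.
  by rewrite addKn modnDr modn_small.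
exact: H.
Qed.

Lemma grow (N : {set 'I_n}) :
  N != set0 -> N != setT -> (#|N| < #|N :|: sh @^-1: N|)%N.
Proof.
move=> N0 NT; rewrite ltnNge; apply/negP => le.
have e1 : N == N :|: sh @^-1: N by rewrite eqEcard subsetUl le.
have sub : sh @^-1: N \subset N.
  apply/subsetP => x xp; have : x \in N :|: sh @^-1: N by rewrite inE xp orbT.
  by rewrite -(eqP e1).
have si := sh_inj.
have e2 : sh @^-1: N == N.
  by rewrite eqEcard sub /= (card_preimset _ si).
case/set0Pn: N0 => j0 j0N.
apply: (negP NT); apply/eqP/setP => j; rewrite inE.
apply: (my_closure (N:=N) (j0:=j0)) => // x xN.
by rewrite -(eqP e2) inE in xN.
Qed.


Section Win.
Variable F : fieldType.
Variables c c' : 'rV[F]_n.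

Definition W k := [set j : 'I_n | [exists t : 'I_k, c 0 (cidx j t) != c' 0 (cidx j t)]].

Lemma W_succ k : W k.+2 = W k.+1 :|: sh @^-1: W k.+1.
Proof.
apply/setP => j; rewrite !inE; apply/existsP/orP.
  case=> t; case: (ltnP t k.+1) => lt ht.
    by left; apply/existsP; exists (Ordinal lt).
  have et : nat_of_ord t = k.+1 by apply/eqP; rewrite eqn_leq lt andbT -ltnS ltn_ord.
  right; apply/existsP; exists (Ordinal (ltnSn k)).
  by rewrite /sh cidxA add1n /= -et.
case=> /existsP [t ht].
  by exists (widen_ord (leqnSn _) t).
have lt : (t.+1 < k.+2)%N by rewrite ltnS.
exists (Ordinal lt); by move: ht; rewrite /sh cidxA add1n.
Qed.

Lemma W_grow : W 1 != set0 -> forall k, (minn n (#|W 1| + k) <= #|W k.+1|)%N.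
Proof.
move=> W10; elim=> [|k IH]; first by rewrite addn0 geq_minr.
have w1 : (0 < #|W 1|)%N by rewrite lt0n cards_eq0.
have n0 : (0 < n)%N by case/set0Pn: W10 => x _; case: x => /= x; case: (n).
rewrite W_succ.
have [WT|WT] := eqVneq (W k.+1) setT.
  rewrite WT setUC setUT cardsT card_ord; exact: geq_minl.
have Wn : W k.+1 != set0.
  rewrite -card_gt0; apply: leq_trans IH; lia.
  have h := grow Wn WT.
  apply: (@leq_trans (#|W k.+1|).+1); [lia | exact: h].
Qed.

Lemma bdist_W b : bdist b c c' = #|W b|.
Proof.
rewrite /bdist /hamming; apply: eq_card => j; rewrite !inE /pib.
rewrite -negb_forall; congr negb; apply/eqP/forallP => [E t | E].
  by move: (congr1 (fun f : {ffun 'I_b -> F} => f t) E); rewrite !ffunE => ->.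
by apply/ffunP => t; rewrite !ffunE; apply/eqP/E.
Qed.

End Win.
End Comb.

Lemma main_lemma (F : fieldType) (p b i : nat) : p \in [pchar F] ->
  (2 <= b)%N -> (b <= p)%N -> (i <= p - b)%N ->
    (exists c c' : 'rV[F]_p,
        [/\ in_cyc_code i c, in_cyc_code i c', c <> c' & bdist b c c' = (i + b)%N])
    /\ (forall c c' : 'rV[F]_p,
        in_cyc_code i c -> in_cyc_code i c' -> c <> c' -> (i + b <= bdist b c c')%N).
Proof.
move=> Hp b2 bp ib.
have ip : (i <= p)%N by lia.
have lower : forall c c' : 'rV[F]_p,
    in_cyc_code i c -> in_cyc_code i c' -> c <> c' -> (i + b <= bdist b c c')%N.
  move=> c c' hc hc' ne.
  set P := vpoly c - vpoly c'.
  have dP : ('X - 1) ^+ i %| P by apply: dvdp_sub; apply: cyc_dvd.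
  have cP : forall j : 'I_p, P`_j = c 0 j - c' 0 j by move=> j; rewrite coefB !coef_vpoly_ord.
  have sP : (size P <= p)%N.
    apply/leq_sizeP => k kp; rewrite coefB.
    move/leq_sizeP: (size_vpoly c) => /(_ k kp) ->.
    by move/leq_sizeP: (size_vpoly c') => /(_ k kp) ->; rewrite subrr.
  have P0 : P != 0.
    apply/eqP => P0; apply: ne; apply/rowP => j.
    by apply/eqP; rewrite -subr_eq0 -cP P0 coef0.
  have wt := wt_bound Hp P0 sP dP.
  have EW : W c c' 1 = [set j : 'I_p | (P`_j != 0)%R].
    apply/setP => j; rewrite !inE cP subr_eq0; apply/existsP/idP.
      by case=> t; rewrite (ord1 t) cidx0.
    by move=> h; exists ord0; rewrite cidx0.
  have W10 : W c c' 1 != set0.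
    apply/set0Pn; move: wt; rewrite -EW => wt.
    have : (0 < #|W c c' 1|)%N by lia.
    by rewrite card_gt0 => /set0Pn.
  have := W_grow W10 b.-1; rewrite prednK; last by lia.
  rewrite bdist_W EW; lia.
split=> //.
set Q := ('X - 1 : {poly F}) ^+ i.
have sQ : size Q = i.+1.
  by rewrite /Q (_ : ('X - 1 : {poly F}) = 'X - 1%:P) ?polyC1 // size_exp_XsubC.
have p0 : (0 < p)%N by lia.
set c := \row_(j < p) Q`_j.
have vc : vpoly c = Q by apply: vpoly_row; rewrite sQ; lia.
have hc : in_cyc_code i c.
  exists 1; rewrite mul1r vc modp_small // sQ size_Xn_sub_1 //; lia.
have hc' : in_cyc_code i (0 : 'rV[F]_p).
  by exists 0; rewrite vpoly0 mul0r mod0p.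
have ilt : (i < p)%N by lia.
have ne : c <> 0.
  move/rowP => /(_ (Ordinal ilt)); rewrite !mxE /=.
  have : Q`_i = 1.
    have mQ : Q \is monic by apply: monic_exp; rewrite (_ : ('X - 1 : {poly F}) = 'X - 1%:P) ?polyC1 // monicXsubC.
    by rewrite -(eqP mQ) lead_coefE sQ.
  by move=> -> /eqP; rewrite oner_eq0.
exists c, 0; split => //.
apply/eqP; rewrite eqn_leq lower // andbT bdist_W.
have sub : W c 0 b \subset [set j : 'I_p | ((j <= i) || (p - b < j))%N].
  apply/subsetP => j; rewrite !inE => /existsP [t].
  rewrite !mxE => nz.
  have xi : (cidx j t <= i)%N.
    rewrite leqNgt; apply/negP => lt; move: nz; rewrite nth_default ?eqxx //.
    by rewrite sQ.
  move: xi; rewrite /cidx /=.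
  have lt := ltn_ord t; have lj := ltn_ord j.
  case: (ltnP (j + t) p) => jt.
    by rewrite modn_small //; lia.
  have e : ((j + t) %% p = j + t - p)%N.
    rewrite -{1}(subnK jt) modnDr modn_small //; lia.
  rewrite e; lia.
apply: leq_trans (subset_leq_card sub) _.
rewrite (card_count p (fun k => (k <= i)%N || (p - b < k)%N)).
have ep : p = (i.+1 + (p - b - i) + (b - 1))%N by lia.
rewrite [X in iota 0 X]ep !iotaD !count_cat add0n.
have c1 := count_size (fun j => (j <= i)%N || (p - b < j)%N) (iota 0 i.+1).
have c3 := count_size (fun j => (j <= i)%N || (p - b < j)%N) (iota (i.+1 + (p - b - i)) (b - 1)).
rewrite !size_iota in c1 c3.
have c2 : count (fun j => (j <= i)%N || (p - b < j)%N) (iota i.+1 (p - b - i)) = 0%N.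
  apply/eqP; rewrite -leqn0 leqNgt -has_count; apply/hasPn => j.
  rewrite mem_iota => /andP [a1 a2]; apply/negP => /orP [] ?; lia.
rewrite add0n c2; lia.
Qed.

Theorem proposition2p7 (F : finFieldType) (p m b : nat) :
  prime p -> (0 < m)%N -> #|F| = (p ^ m)%N -> (2 <= b)%N -> (b <= p)%N ->
  forall i : nat, (i <= p - b)%N ->
    (exists c c' : 'rV[F]_(p ^ 1),
        [/\ in_cyc_code i c, in_cyc_code i c', c <> c' & bdist b c c' = (i + b)%N])
    /\ (forall c c' : 'rV[F]_(p ^ 1),
        in_cyc_code i c -> in_cyc_code i c' -> c <> c' -> (i + b <= bdist b c c')%N).
Proof.
move=> pr m0 cF b2 bp i ib.
have Hp : p \in [pchar F] by apply: card_finPcharP cF pr.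
exact: main_lemma Hp b2 bp ib.
Qed.
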